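(* Let $p$ be an odd prime and let $(G,H,T)$ be the envelope of a right conjugacy closed loop of order $2p$. Let $K$ be a subgroup with $H\lneq K\lneq G$, $|G:K|=2$ and $|K:H|=p$, and put $K_1=\langle T\cap K\rangle$, $H_1=H\cap K_1$. Assume $H\ne1$ and $[s,K_1]=1$ for all $s\in T\setminus K$. Then $H_1=1$, $K_1\le Z(G)$, and $G\cong C_p\wr C_2$.
   Context: For a finite loop $\mathcal{L}$ with identity $e$: $G=\langle R_a\mid a\in\mathcal L\rangle$ with $R_a\colon x\mapsto xa$, $H$ the stabilizer of $e$ in $G$, $T=\{R_a\}$; $(G,H,T)$ is the envelope; the loop is right conjugacy closed if $T$ is a union of conjugacy classes of $G$. *)

(* Defs.v *)
From HB Require Import structures.
From mathcomp Require Import all_boot all_order all_fingroup all_solvable.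
Set Implicit Arguments. Unset Strict Implicit. Unset Printing Implicit Defensive.
Local Open Scope group_scope.

(* The permutation induced by f, when f is injective (identity otherwise). *)
Definition mkperm (T : finType) (f : T -> T) : {perm T} :=
  insubd (1 : {perm T}) [ffun x => f x].

Definition is_loop (L : finType) (mul : L -> L -> L) (e : L) : Prop :=
  (forall x, mul e x = x /\ mul x e = x) /\
  (forall a, bijective (mul a)) /\ (forall a, bijective (fun x => mul x a)).

Definition Rmul (L : finType) (mul : L -> L -> L) (a : L) : {perm L} :=
  mkperm (fun x => mul x a).

Definition Tset (L : finType) (mul : L -> L -> L) : {set {perm L}} :=
  [set Rmul mul a | a : L].

Definition Genv (L : finType) (mul : L -> L -> L) : {group {perm L}} :=
  <<Tset mul>>%G.

Definition Henv (L : finType) (mul : L -> L -> L) (e : L) : {group {perm L}} :=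
  'C_(Genv mul)[e | 'P]%G.

Definition rcc (L : finType) (mul : L -> L -> L) : Prop :=
  forall t g, t \in Tset mul -> g \in Genv mul -> t ^ g \in Tset mul.

(* The wreath product C_p wr C_2, as the imprimitive permutation group on
   bool * 'I_p generated by a p-cycle on the first block and the block swap. *)
Definition wr_cyc (p : nat) : {perm (bool * 'I_p)} :=
  mkperm (fun x : bool * 'I_p => if x.1 then x else (x.1, ordS x.2)).
Definition wr_swap (p : nat) : {perm (bool * 'I_p)} :=
  mkperm (fun x : bool * 'I_p => (~~ x.1, x.2)).
Definition wreath_Cp_C2 (p : nat) : {group {perm (bool * 'I_p)}} :=
  <<[set wr_cyc p; wr_swap p]>>%G.

(* Main.v *)
Require Import Defs.
From mathcomp Require Import all_boot all_order all_fingroup all_solvable.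
Set Implicit Arguments. Unset Strict Implicit. Unset Printing Implicit Defensive.
Local Open Scope group_scope.

Lemma mkpermE (T : finType) (f : T -> T) : injective f -> mkperm f =1 f.
Proof.
move=> fi x; rewrite /mkperm -pvalE val_insubd.
have -> : injectiveb [ffun x => f x] by apply/injectiveP => y z; rewrite !ffunE => /fi.
by rewrite ffunE.
Qed.

Lemma cycE p (x : bool * 'I_p) : wr_cyc p x = if x.1 then x else (x.1, ordS x.2).
Proof.
rewrite /wr_cyc mkpermE //; case=> [[] i] [[] j] /=.
all: try congruence.
by move=> /(congr1 snd) /= /ordS_inj ->.

Qed.

Lemma swapE p (x : bool * 'I_p) : wr_swap p x = (~~ x.1, x.2).
Proof.
by rewrite /wr_swap mkpermE //; case=> [b i] [c j] /= [/negb_inj -> ->].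
Qed.

Lemma iter_ordS p (i : 'I_p) u : val (iter u (@ordS p) i) = (i + u) %% p.
Proof.
elim: u => [|u IH] /=; first by rewrite addn0 modn_small.
by rewrite IH addnS -addn1 modnDml addn1.
Qed.

Definition zz p := wr_cyc p ^ wr_swap p.
Definition Pm p (fl : bool) (u v : nat) : {perm bool * 'I_p} :=
  wr_cyc p ^+ u * zz p ^+ v * (if fl then wr_swap p else 1).

Lemma swapV p : (wr_swap p)^-1 = wr_swap p.
Proof.
apply/eqP; rewrite eq_invg_mul; apply/eqP/permP => x.
by rewrite permM !swapE perm1 /= negbK; case: x.
Qed.

Lemma iter_ordS_p p (i : 'I_p) : iter p (@ordS p) i = i.
Proof. by apply: val_inj; rewrite iter_ordS modnDr modn_small. Qed.

Lemma cycX p u x : (wr_cyc p ^+ u) x = if x.1 then x else (x.1, iter u (@ordS p) x.2).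
Proof.
elim: u => [|u IH]; first by rewrite expg0 perm1; case: x => [[] i].
rewrite expgSr permM IH cycE; case: x {IH} => [[] i] //.
Qed.

Lemma zzX p v x : (zz p ^+ v) x = if x.1 then (x.1, iter v (@ordS p) x.2) else x.
Proof.
rewrite /zz -conjXg conjgE swapV !permM cycX !swapE /=.
by case: x => [[] i].
Qed.

Lemma PmE p fl u v x :
  Pm p fl u v x = (x.1 (+) fl, iter (if x.1 then v else u) (@ordS p) x.2).
Proof.
rewrite /Pm !permM cycX zzX; case: x => [[] i] /=; case: fl; rewrite ?swapE ?perm1 //.
Qed.

Lemma Pm_in p fl u v : Pm p fl u v \in wreath_Cp_C2 p.
Proof.
have cW : wr_cyc p \in wreath_Cp_C2 p by apply: mem_gen; rewrite !inE eqxx.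
have sW : wr_swap p \in wreath_Cp_C2 p by apply: mem_gen; rewrite !inE eqxx orbT.
rewrite /Pm /zz !groupM ?groupX ?groupJ //; case: fl => //; exact: group1.
Qed.

Lemma cycXp p : wr_cyc p ^+ p = 1.
Proof. by apply/permP => x; rewrite cycX perm1 iter_ordS_p; case: x => [[] i]. Qed.

Lemma zzXp p : zz p ^+ p = 1.
Proof. by rewrite /zz -conjXg cycXp conj1g. Qed.

Unset Implicit Arguments.

Theorem proposition5p5 (p : nat) (L : finType) (mul : L -> L -> L) (e : L)
  (K : {group {perm L}}) :
  prime p -> odd p ->
  is_loop mul e -> #|L| = (2 * p)%N -> rcc mul ->
  Henv mul e \proper K -> K \proper Genv mul ->
  #|Genv mul : K| = 2 -> #|K : Henv mul e| = p ->
  Henv mul e != 1 :> {set {perm L}} ->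
  (forall s k, s \in Tset mul :\: K -> k \in <<Tset mul :&: K>> -> commute s k) ->
  [/\ Henv mul e :&: <<Tset mul :&: K>> = 1,
      <<Tset mul :&: K>> \subset 'Z(Genv mul)
    & Genv mul \isog wreath_Cp_C2 p].
Proof.
move=> pr_p odd_p [idl [lbij rbij]] cardL rccT ltHK ltKG iGK iKH ntH commT.
set Tt := Tset mul in rccT commT *.
set G := Genv mul in ltKG iGK *.
set H := Henv mul e in ltHK iKH ntH *.
set R := Rmul mul.
have RE a x : R a x = mul x a.
  by rewrite /R /Rmul mkpermE //; exact: (bij_inj (rbij a)).
have Re a : R a e = a by rewrite RE; case: (idl a).
have RT a : R a \in Tt by apply/imsetP; exists a.
have TtG : Tt \subset G := subset_gen _.
have RG a : R a \in G := subsetP TtG _ (RT a).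
have inH g : (g \in H) = (g \in G) && (g e == e).
  by rewrite /H /Henv inE (sameP astab1P eqP).
have sHK : H \subset K := proper_sub ltHK.
have sKG : K \subset G := proper_sub ltKG.
have nKG : K <| G := index2_normal sKG iGK.
have cosetK g : g \in G -> (g \in K) = (R (g e) \in K).
  move=> Gg; set r := R (g e).
  have hH : g * r^-1 \in H.
    rewrite inH groupM ?groupV ?RG //= permM.
    by rewrite -[in X in _ == X](permK r e) /r Re.
  by rewrite -{1}(mulgKV r g) groupMl // (subsetP sHK).
pose inB x := R x \in K.
have out2 x y : x \in G -> y \in G -> x \notin K -> y \notin K -> x * y \in K.
  move=> Gx Gy Kx Ky.
  have : x \in K :* y^-1 by rewrite (rcoset_index2 sKG iGK) ?inE ?groupV ?Gx ?Gy ?Kx ?Ky.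
  by rewrite mem_rcoset invgK.
have inBg g x : g \in G -> inB (g x) = (inB x == (g \in K)).
  move=> Gg; rewrite /inB -[in g x](Re x) -permM -cosetK; last by rewrite groupM ?RG.

  case Kr: (R x \in K); first by rewrite groupMl.
  case Kg: (g \in K); first by rewrite groupMr // Kr.
  by rewrite out2 ?RG ?Kr ?Kg.
have inBe : inB e by rewrite /inB -[e](perm1 e) -(cosetK 1) ?group1.
have [s0 s0T] : exists s0, s0 \in Tt :\: K.
  apply/set0Pn; rewrite setD_eq0; apply/negP => sTK.
  by move: ltKG; rewrite properE /G /Genv /= gen_subG sTK andbF.
have s0G : s0 \in G by rewrite (subsetP TtG) //; case/setDP: s0T.
have s0K : s0 \notin K by case/setDP: s0T.
set K1 := <<Tt :&: K>> in commT *.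
have HK1 : H :&: K1 = 1.
  apply/trivgP/subsetP => h /setIP [Hh K1h]; rewrite inE; apply/eqP/permP => x.
  rewrite perm1.
  have he : h e = e by move: Hh; rewrite inH => /andP [_ /eqP].
  have fixout y : ~~ inB y -> h y = y.
    move=> By; have c : commute (R y) h by apply: commT K1h; rewrite inE By RT.
    by rewrite -[in h y](Re y) -permM c permM he Re.
  case Bx: (inB x); last by rewrite fixout ?Bx.
  have c := commT s0 h s0T K1h.
  apply: (@perm_inj _ s0).
  by rewrite -permM -c permM fixout // inBg // Bx (negbTE s0K).
have K1K : K1 \subset K by rewrite gen_subG subsetIr.
have K1G : K1 \subset G := subset_trans K1K sKG.
have K1T k : k \in K1 -> k = R (k e).
  move=> K1k; have Kk := subsetP K1K k K1k.
  have Rk : R (k e) \in K1.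
    by apply: mem_gen; rewrite inE RT /= -/(inB (k e)) inBg ?(subsetP sKG) // inBe Kk.
  have : k * (R (k e))^-1 \in H :&: K1.
    rewrite inE [_ \in K1]groupM ?groupV // andbT inH groupM ?groupV ?RG ?(subsetP K1G) //= permM.
    by apply/eqP/(canLR (permK _)); rewrite Re.
  by rewrite HK1 inE -eq_mulgV1 => /eqP.
have K1J k g : k \in K1 -> g \in G -> k ^ g \in K1.
  move=> K1k Gg; rewrite (K1T k K1k); apply: mem_gen.
  rewrite inE rccT ?RT // memJ_norm ?(subsetP (normal_norm nKG)) //.
  by rewrite -(K1T k K1k) (subsetP K1K).
have K1reg k x : k \in K1 -> k x = x -> k = 1.
  move=> K1k kx.
  have : k ^ (R x)^-1 \in H :&: K1.
    rewrite inE K1J ?groupV ?RG // andbT inH groupJ ?groupV ?RG ?(subsetP K1G) //=.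
    by rewrite conjgE invgK !permM Re kx; apply/eqP/(canLR (permK _)); rewrite Re.
  by rewrite HK1 inE conjg_eq1 => /eqP.
pose B := [set x | inB x].
have cardB : #|B| = p.
  have -> : B = orbit 'P K e.
    apply/setP => x; rewrite inE; apply/idP/imsetP => [Bx | [k Kk ->]].
      by exists (R x) => //; exact/esym/Re.
    by rewrite [_ _ k]/= inBg ?(subsetP sKG) // inBe Kk.
  rewrite card_orbit -iKH; congr #|K : _|.
  apply/setP => g; rewrite inE (sameP astab1P eqP).
  apply/andP/idP => [[Kg ge]|Hg]; first by rewrite inH (subsetP sKG).
  by rewrite (subsetP sHK) //; move: Hg; rewrite inH => /andP[].
have inBk k x : k \in K -> inB (k x) = inB x.
  by move=> Kk; rewrite inBg ?(subsetP sKG) // Kk eqb_id.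
have cardK1 : #|K1| = p.
  rewrite -cardB -(card_in_imset (f := fun k : {perm L} => k e)); last first.
    by move=> k1 k2 K1k1 K1k2 /= eq12; rewrite (K1T k1) // (K1T k2) // eq12.
  apply: eq_card => x; rewrite inE; apply/imsetP/idP => [[k K1k ->]|Bx].
    by rewrite inBk ?(subsetP K1K).
  exists (R x); last by rewrite Re.
  by apply: mem_gen; rewrite inE RT.
have cycK1 : cyclic K1 by apply: prime_cyclic; rewrite cardK1.
have abK1 := cyclic_abelian cycK1.
have ZK1 : K1 \subset 'Z(G).
  rewrite subsetI K1G centsC /G /Genv gen_subG.
  apply/subsetP => t Tt_t; case Kt: (t \in K).
    by apply: (subsetP abK1); apply: mem_gen; rewrite inE Tt_t Kt.
  by apply/centP => k K1k; apply: commT; rewrite // inE Kt.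
split=> //.
have [c defK1] := cyclicP cycK1.
have ordc : #[c] = p by rewrite orderE -defK1 cardK1.
have memK1 k : (k \in K1) = (k \in <[c]>) := congr1 (fun S : {set _} => k \in S) defK1.
have cX i : c ^+ i \in K1.
  by apply: groupX; move: (cycle_id c); rewrite -memK1.
have Kc i : c ^+ i \in K := subsetP K1K _ (cX i).
have cC i s : s \in G -> commute (c ^+ i) s.
  move=> Gs; have : c ^+ i \in 'C(G) by apply: (subsetP (subset_trans ZK1 (subsetIr _ _))).
  by move/centP; apply.
set b := s0 e.
have Bb : ~~ inB b by rewrite /b inBg // inBe (negbTE s0K).
have p_gt1 : 1 < p := prime_gt1 pr_p.
have p_gt0 : 0 < p := prime_gt0 pr_p.
have ptB x : inB x -> exists2 i, i < p & x = (c ^+ i) e.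
  move=> Bx; have : R x \in <[c]> by rewrite -memK1; apply: mem_gen; rewrite inE RT.
  by case/cyclePmin => i; rewrite ordc => ltip eqR; exists i => //; rewrite -eqR Re.
have ptB' x : ~~ inB x -> exists2 i, i < p & x = (c ^+ i) b.
  move=> Bx.
  have : x \in [set (k : {perm L}) b | k in K1].
    have sO : [set (k : {perm L}) b | k in K1] \subset ~: B.
      by apply/subsetP => y /imsetP [k K1k ->]; rewrite !inE inBk ?(subsetP K1K).
    have cO : #|~: B| <= #|[set (k : {perm L}) b | k in K1]|.
      rewrite card_in_imset; last first.
        move=> k1 k2 K1k1 K1k2 /= eq12; apply/eqP; rewrite eq_mulgV1; apply/eqP.
        apply: (K1reg _ b); first by rewrite groupM ?groupV.
        by rewrite permM eq12 permK.
      by rewrite cardK1 cardsCs setCK cardL cardB mul2n -addnn addnK.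
    have /eqP -> : [set (k : {perm L}) b | k in K1] == ~: B by rewrite eqEcard sO cO.
    by rewrite !inE.
  case/imsetP => k K1k ->; have : k \in <[c]> by rewrite -memK1.
  by case/cyclePmin => i; rewrite ordc => ltip ->; exists i.
have cmod n : c ^+ (n %% p) = c ^+ n by rewrite -ordc expg_mod_order.
pose base (fl : bool) := if fl then b else e.
pose gX (q : bool * 'I_p) := (c ^+ q.2) (base q.1).
have inBgX q : inB (gX q) = ~~ q.1.
  by case: q => [[] i]; rewrite /gX inBk ?Kc //= (negbTE Bb).
have gX_inj : injective gX.
  move=> [fl i] [fl' j] eqg.
  have eb : fl = fl' by move: (inBgX (fl, i)); rewrite eqg inBgX /= => /negb_inj.
  subst fl'; congr (_, _); move: eqg; rewrite /gX /= => eqg.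
  have : c ^+ i * (c ^+ j)^-1 = 1.
    apply: (K1reg _ (base fl)); first by rewrite groupM ?groupV ?cX.
    by rewrite permM eqg permK.
  move/eqP; rewrite -eq_mulgV1 eq_expg_mod_order ordc !modn_small // => /eqP.
  exact: val_inj.
have [f gXK fK] : bijective gX.
  by apply: inj_card_bij gX_inj _; rewrite card_prod card_bool card_ord cardL.
have f_inj : injective f := can_inj fK.
pose phi (s : {perm L}) : {perm bool * 'I_p} := mkperm (fun x => f (s (gX x))).
have phiE s x : phi s x = f (s (gX x)).
  by rewrite /phi mkpermE // => y z /f_inj /perm_inj /gX_inj.
have phiM : {in [set: {perm L}] &, {morph phi : x y / x * y}}.
  by move=> s t _ _; apply/permP => x; rewrite [RHS]permM !phiE permM fK.
pose Phi := @Morphism _ _ [set: {perm L}] phi phiM.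
have injPhi : 'injm Phi.
  apply/injmP => s t _ _ eq; apply/permP => y.
  have := congr1 (fun u : {perm _} => u (f y)) eq; rewrite /= !phiE fK.
  exact: f_inj.
have isoG : G \isog Phi @* G := sub_isog (subsetT G) injPhi.
have phiPm s fl u v : s \in G -> s e = (c ^+ u) (base fl) ->
    s b = (c ^+ v) (base (~~ fl)) -> phi s = Pm p fl u v.
  move=> Gs se sb; apply/permP => -[fl' i]; rewrite phiE PmE /=.
  apply: (canLR gXK); rewrite /gX /= -permM cC // permM.
  case: fl'; rewrite /= ?se ?sb -permM -expgD iter_ordS cmod addnC //.
have phiS s : s \in G -> exists q : bool * 'I_p * 'I_p, phi s = Pm p q.1.1 q.1.2 q.2.
  move=> Gs.
  have Be : inB (s e) = (s \in K) by rewrite inBg // inBe.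
  have Bb' : inB (s b) = (s \notin K) by rewrite inBg // (negbTE Bb); case: (s \in K).
  case Ks: (s \in K).
    have [u ltu eu] := ptB (s e) (etrans Be Ks).
    have [v ltv ev] : exists2 v, v < p & s b = (c ^+ v) b by apply: ptB'; rewrite Bb' Ks.
    by exists (false, Ordinal ltu, Ordinal ltv); apply: phiPm.
  have [u ltu eu] : exists2 u, u < p & s e = (c ^+ u) b by apply: ptB'; rewrite Be Ks.
  have [v ltv ev] := ptB (s b) (etrans Bb' (negbT Ks)).
  by exists (true, Ordinal ltu, Ordinal ltv); apply: phiPm.
pose S := [set Pm p q.1.1 q.1.2 q.2 | q : bool * 'I_p * 'I_p].
have imG : Phi @* G \subset S.
  apply/subsetP => _ /morphimP [s _ Gs ->].
  by have [q eq] := phiS s Gs; apply/imsetP; exists q => //; exact: eq.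
have cardS : #|S| <= p * p * 2.
  apply: leq_trans (leq_imset_card _ _) _.
  by rewrite cardT -cardE !card_prod card_bool !card_ord -mulnA mulnC.
have cardH : #|H| = p.
  have imH : Phi @* H \subset <[zz p]>.
    apply/subsetP => _ /morphimP [h _ Hh ->].
    have Gh : h \in G by rewrite (subsetP (proper_sub (proper_trans ltHK ltKG))).
    have Kh : h \in K := subsetP sHK _ Hh.
    have he : h e = e by move: Hh; rewrite inH => /andP [_ /eqP].
    have [v ltv ev] : exists2 v, v < p & h b = (c ^+ v) b by apply: ptB'; rewrite inBk.
    rewrite /= (phiPm h false 0 v) //; last by rewrite expg0 perm1.
    by rewrite /Pm expg0 mul1g mulg1 mem_cycle.
  have : #|H| %| p.
    rewrite -(card_injm injPhi (subsetT H)).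
    apply: dvdn_trans (cardSg imH) _.
    by rewrite order_dvdn zzXp.
  case/primeP: pr_p => _ /[apply] /orP [] /eqP // H1.
  by move: ntH; rewrite trivg_card_le1 H1.
have cardG : #|G| = (p * p * 2)%N.
  by rewrite -(Lagrange sKG) iGK -(Lagrange sHK) iKH cardH.
have SG : Phi @* G = S.
  apply/eqP; rewrite eqEcard imG (card_injm injPhi (subsetT G)) cardG cardS //.
have eqW : Phi @* G = wreath_Cp_C2 p.
  apply/eqP; rewrite eqEsubset; apply/andP; split.
    rewrite SG; apply/subsetP => _ /imsetP [q _ ->]; exact: Pm_in.
  have memG y : (y \in Phi @* G) = (y \in S) := congr1 (fun X : {set _} => y \in X) SG.
  rewrite /wreath_Cp_C2 gen_subG; apply/subsetP => y; rewrite !inE => Hy.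
  suff yS : y \in S by move: yS; rewrite -memG; exact.
  case/orP: Hy => /eqP ->; apply/imsetP.
    exists (false, Ordinal p_gt1, Ordinal p_gt0) => //.
    by rewrite /Pm /= expg1 expg0 !mulg1.
  exists (true, Ordinal p_gt0, Ordinal p_gt0) => //.
  by rewrite /Pm /= !expg0 !mul1g.
by rewrite -eqW.
Qed.
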